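(* Let $X$ be a topological space. The idempotents of $N(X)$ are precisely the characteristic functions $\chi_U$ with $U$ a regular open subset of $X$, and $U\mapsto\chi_U$ is a boolean isomorphism from the boolean algebra ${\sf RO}(X)$ of regular open subsets of $X$ onto the boolean algebra of idempotents of $N(X)$.
   Context: $B(X)$ is the set of bounded real-valued functions on $X$. For $f\in B(X)$ and $x\in X$, with $\mathcal N_x$ the set of open neighborhoods of $x$: $f_*(x)=\sup\{\inf f[U]\mid U\in\mathcal N_x\}$, $f^*(x)=\inf\{\sup f[U]\mid U\in\mathcal N_x\}$, and $f^\#=(f^* )_*$. $f$ is normal if $f=f^\#$, and $N(X)=\{f\in B(X)\mid f=f^\#\}$. $N(X)$ is a Dedekind complete bounded archimedean $\ell$-algebra whose operations (addition, multiplication, scalar multiplication, binary joins and meets) are the normalizations $(\cdot)^\#$ of the corresponding pointwise operations; in particular positive scalar multiplication and meets are pointwise. The idempotents of a commutative ring form a boolean algebra with $e\wedge f=ef$, $e\vee f=e+f-ef$, $\lnot e=1-e$. A set $U$ is regular open if $U={\sf int}\,{\sf cl}(U)$. *)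

(* Defs.v *)
From HB Require Import structures.
From mathcomp Require Import all_boot all_order all_algebra.
From mathcomp Require Import all_classical all_reals all_analysis.
Set Implicit Arguments. Unset Strict Implicit. Unset Printing Implicit Defensive.
Import Order.TTheory GRing.Theory Num.Theory.
Local Open Scope classical_set_scope.
Local Open Scope ring_scope.

Section NormalFunctions.
Context {R : realType} {X : topologicalType}.

Definition bounded_fun (f : X -> R) : Prop := exists M : R, forall x, `|f x| <= M.

Definition open_nbhd (x : X) : set (set X) := [set U | open U /\ U x].

Definition lower_fun (f : X -> R) : X -> R :=
  fun x => sup [set inf (f @` U) | U in open_nbhd x].

Definition upper_fun (f : X -> R) : X -> R :=
  fun x => inf [set sup (f @` U) | U in open_nbhd x].

Definition sharp (f : X -> R) : X -> R := lower_fun (upper_fun f).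

Definition normal_fun (f : X -> R) : Prop := bounded_fun f /\ sharp f = f.

Definition addN (f g : X -> R) : X -> R := sharp (fun x => f x + g x).
Definition subN (f g : X -> R) : X -> R := sharp (fun x => f x - g x).
Definition mulN (f g : X -> R) : X -> R := sharp (fun x => f x * g x).
Definition oneN : X -> R := sharp (fun _ => 1).
Definition zeroN : X -> R := sharp (fun _ => 0).

Definition idempotentN (e : X -> R) : Prop := normal_fun e /\ mulN e e = e.

Definition idem_meet (e f : X -> R) : X -> R := mulN e f.
Definition idem_join (e f : X -> R) : X -> R := subN (addN e f) (mulN e f).
Definition idem_compl (e : X -> R) : X -> R := subN oneN e.

Definition chi (U : set X) : X -> R := \1_U.

End NormalFunctions.

Definition regular_open {X : topologicalType} (U : set X) : Prop :=
  U = interior (closure U).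
Definition ro_meet {X : topologicalType} (U V : set X) : set X := U `&` V.
Definition ro_join {X : topologicalType} (U V : set X) : set X :=
  interior (closure (U `|` V)).
Definition ro_compl {X : topologicalType} (U : set X) : set X := interior (~` U).

(* Main.v *)
Require Import Defs.
From mathcomp Require Import all_boot all_order all_algebra.
From mathcomp Require Import all_classical all_reals all_analysis.
From mathcomp Require Import ring lra.
Import Order.TTheory GRing.Theory Num.Theory.
Local Open Scope classical_set_scope.
Local Open Scope ring_scope.

Section Aux.
Context {R : realType}.

Lemma supP {E : set R} {y : R} : has_ubound E -> E y -> y <= sup E.
Proof. by move=> h Ey; apply: ub_le_sup. Qed.
Lemma infP {E : set R} {y : R} : has_lbound E -> E y -> inf E <= y.
Proof. by move=> h Ey; apply: ge_inf. Qed.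

Lemma sup_sq (S : set R) (M : R) : S !=set0 -> (forall s, S s -> 0 <= s <= M) ->
  sup [set s ^+ 2 | s in S] = (sup S) ^+ 2.
Proof.
move=> [s0 Ss0] hS.
have hubS : has_ubound S by exists M => s /hS /andP[].
have S2n : [set s ^+ 2 | s in S] !=set0 by exists (s0 ^+ 2); exists s0.
have hub2 : has_ubound [set s ^+ 2 | s in S].
  exists (M ^+ 2) => _ [s /hS /andP[s0' sM] <-]; nra.
have supS0 : 0 <= sup S.
  have := supP hubS Ss0; have := hS _ Ss0; move=> /andP[? ?] ?; lra.
have sup20 : 0 <= sup [set s ^+ 2 | s in S].
  apply: (le_trans _ (supP hub2 (ex_intro2 _ _ s0 Ss0 erefl))).
  exact: sqr_ge0.
apply/le_anti/andP; split.
  apply: ge_sup => // _ [s Ss <-].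
  have := supP hubS Ss; have := hS _ Ss; move=> /andP[? ?] ?; nra.
have : sup S <= Num.sqrt (sup [set s ^+ 2 | s in S]).
  apply: ge_sup; first by exists s0.
  move=> s Ss; have /andP[s0' _] := hS _ Ss.
  rewrite -(ger0_norm s0') -sqrtr_sqr ler_sqrt //.
  exact: supP hub2 (ex_intro2 _ _ s Ss erefl).
move=> h; rewrite -[X in _ <= X](sqr_sqrtr sup20).
have := sqrtr_ge0 (sup [set s ^+ 2 | s in S]); nra.
Qed.

Lemma inf_sq (S : set R) (M : R) : S !=set0 -> (forall s, S s -> 0 <= s <= M) ->
  inf [set s ^+ 2 | s in S] = (inf S) ^+ 2.
Proof.
move=> [s0 Ss0] hS.
have hlbS : has_lbound S by exists 0 => s /hS /andP[].
have S2n : [set s ^+ 2 | s in S] !=set0 by exists (s0 ^+ 2); exists s0.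
have hlb2 : has_lbound [set s ^+ 2 | s in S].
  by exists 0 => _ [s _ <-]; exact: sqr_ge0.
have infS0 : 0 <= inf S.
  by apply: lb_le_inf; [exists s0|move=> s /hS /andP[]].
have inf20 : 0 <= inf [set s ^+ 2 | s in S].
  by apply: lb_le_inf => // _ [s _ <-]; exact: sqr_ge0.
apply/le_anti/andP; split; last first.
  apply: lb_le_inf => // _ [s Ss <-].
  have := infP hlbS Ss; have := hS _ Ss; move=> /andP[? ?] ?; nra.
have : Num.sqrt (inf [set s ^+ 2 | s in S]) <= inf S.
  apply: lb_le_inf; first by exists s0.
  move=> s Ss; have /andP[s0' _] := hS _ Ss.
  rewrite -(ger0_norm s0') -sqrtr_sqr ler_sqrt ?sqr_ge0 //.
  exact: infP hlb2 (ex_intro2 _ _ s Ss erefl).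
move=> h; rewrite -[X in X <= _](sqr_sqrtr inf20).
have := sqrtr_ge0 (inf [set s ^+ 2 | s in S]); nra.
Qed.
End Aux.

Section Env.
Context {R : realType} {X : topologicalType}.
Implicit Types (h : X -> R) (A B U : set X).

Lemma nbhdT (x : X) : open_nbhd x setT.
Proof. by split => //; exact: openT. Qed.

Lemma imnbhd_n0 (F : set X -> R) (x : X) : [set F U | U in open_nbhd x] !=set0.
Proof. by exists (F setT); exists setT => //; exact: nbhdT. Qed.

Lemma im_n0 h U x : U x -> h @` U !=set0.
Proof. by move=> Ux; exists (h x); exists x. Qed.

Lemma sup_im_bnd {h m M U x} : (forall y, m <= h y <= M) -> U x ->
  m <= sup (h @` U) <= M.
Proof.
move=> hb Ux.
have hub : has_ubound (h @` U) by exists M => _ [y _ <-]; case/andP: (hb y).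
apply/andP; split.
  apply: (le_trans _ (supP hub (ex_intro2 _ _ x Ux erefl))).
  by case/andP: (hb x).
by apply: ge_sup; [exact: im_n0 Ux| move=> _ [y _ <-]; case/andP: (hb y)].
Qed.

Lemma inf_im_bnd {h m M U x} : (forall y, m <= h y <= M) -> U x ->
  m <= inf (h @` U) <= M.
Proof.
move=> hb Ux.
have hlb : has_lbound (h @` U) by exists m => _ [y _ <-]; case/andP: (hb y).
apply/andP; split; last first.
  apply: (le_trans (infP hlb (ex_intro2 _ _ x Ux erefl))).
  by case/andP: (hb x).
by apply: lb_le_inf; [exact: im_n0 Ux| move=> _ [y _ <-]; case/andP: (hb y)].
Qed.

Lemma upper_bnd h m M x : (forall y, m <= h y <= M) -> m <= upper_fun h x <= M.
Proof.
move=> hb; rewrite /upper_fun.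
have hlb : has_lbound [set sup (h @` U) | U in open_nbhd x].
  by exists m => _ [U [_ Ux] <-]; case/andP: (sup_im_bnd hb Ux).
apply/andP; split.
  apply: lb_le_inf; first exact: imnbhd_n0.
  by move=> _ [U [_ Ux] <-]; case/andP: (sup_im_bnd hb Ux).
apply: (le_trans (infP hlb (ex_intro2 _ _ setT (nbhdT x) erefl))).
by case/andP: (sup_im_bnd hb (I : setT x)).
Qed.

Lemma lower_bnd h m M x : (forall y, m <= h y <= M) -> m <= lower_fun h x <= M.
Proof.
move=> hb; rewrite /lower_fun.
have hub : has_ubound [set inf (h @` U) | U in open_nbhd x].
  by exists M => _ [U [_ Ux] <-]; case/andP: (inf_im_bnd hb Ux).
apply/andP; split; last first.
  apply: ge_sup; first exact: imnbhd_n0.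
  by move=> _ [U [_ Ux] <-]; case/andP: (inf_im_bnd hb Ux).
apply: (le_trans _ (supP hub (ex_intro2 _ _ setT (nbhdT x) erefl))).
by case/andP: (inf_im_bnd hb (I : setT x)).
Qed.

Lemma upper_eq h m M x c : (forall y, m <= h y <= M) ->
  (forall U, open U -> U x -> exists2 y, U y & c <= h y) ->
  (exists U, [/\ open U, U x & forall y, U y -> h y <= c]) ->
  upper_fun h x = c.
Proof.
move=> hb h1 [U0 [oU0 U0x hU0]]; rewrite /upper_fun.
have hub U : has_ubound (h @` U) by exists M => _ [y _ <-]; case/andP: (hb y).
have lbc : forall t, [set sup (h @` U) | U in open_nbhd x] t -> c <= t.
  move=> _ [U [oU Ux] <-]; have [y Uy cy] := h1 U oU Ux.
  exact: (le_trans cy (supP (hub U) (ex_intro2 _ _ y Uy erefl))).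
have hlb : has_lbound [set sup (h @` U) | U in open_nbhd x] by exists c.
apply/le_anti/andP; split; last by apply: lb_le_inf; [exact: imnbhd_n0|].
apply: (le_trans (infP hlb (ex_intro2 _ _ U0 (conj oU0 U0x) erefl))).
by apply: ge_sup; [exact: im_n0 U0x| move=> _ [y Uy <-]; exact: hU0].
Qed.

Lemma lower_eq h m M x c : (forall y, m <= h y <= M) ->
  (forall U, open U -> U x -> exists2 y, U y & h y <= c) ->
  (exists U, [/\ open U, U x & forall y, U y -> c <= h y]) ->
  lower_fun h x = c.
Proof.
move=> hb h1 [U0 [oU0 U0x hU0]]; rewrite /lower_fun.
have hlb U : has_lbound (h @` U) by exists m => _ [y _ <-]; case/andP: (hb y).
have ubc : forall t, [set inf (h @` U) | U in open_nbhd x] t -> t <= c.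
  move=> _ [U [oU Ux] <-]; have [y Uy cy] := h1 U oU Ux.
  exact: (le_trans (infP (hlb U) (ex_intro2 _ _ y Uy erefl)) cy).
have hub : has_ubound [set inf (h @` U) | U in open_nbhd x] by exists c.
apply/le_anti/andP; split; first by apply: ge_sup; [exact: imnbhd_n0|].
apply: (le_trans _ (supP hub (ex_intro2 _ _ U0 (conj oU0 U0x) erefl))).
by apply: lb_le_inf; [exact: im_n0 U0x| move=> _ [y Uy <-]; exact: hU0].
Qed.

End Env.

Section Chi.
Context {R : realType} {X : topologicalType}.
Implicit Types (A B U : set X).

Lemma chi_in {A x} : A x -> chi A x = 1 :> R.
Proof. by move=> Ax; rewrite /chi indicE mem_set. Qed.
Lemma chi_out {A x} : ~ A x -> chi A x = 0 :> R.
Proof. by move=> Ax; rewrite /chi indicE memNset. Qed.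
Lemma chi_bnd A x : (0 : R) <= (chi A x : R) <= 1.
Proof. by have [Ax|nAx] := pselect (A x); [rewrite chi_in // | rewrite chi_out //]; lra. Qed.
Lemma chi2_bnd A B x : (0 : R) <= (chi A x : R) + chi B x <= 2.
Proof. by have := chi_bnd A x; have := chi_bnd B x; lra. Qed.

Lemma cl_meet {A} {x : X} {U} : closure A x -> open U -> U x -> exists y, U y /\ A y.
Proof.
move=> clA oU Ux; have : nbhs x U by rewrite nbhsE; exists U.
by move=> /clA [y [Ay Uy]]; exists y.
Qed.

Lemma ncl {A} {x : X} : ~ closure A x -> exists U, [/\ open U, U x & forall y, U y -> ~ A y].
Proof.
apply: contra_notP => H B; rewrite nbhsE => -[U [oU Ux] UB].
apply: contrapT => nAB; apply: H; exists U; split => // y Uy Ay.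
by apply: nAB; exists y; split => //; exact: UB.
Qed.

Lemma int_in {A} {x : X} : interior A x -> exists U, [/\ open U, U x & U `<=` A].
Proof. by rewrite /interior nbhsE => -[U [oU Ux] UA]; exists U. Qed.

Lemma nint {A} {x : X} {U} : ~ interior A x -> open U -> U x -> exists y, U y /\ ~ A y.
Proof.
move=> nA oU Ux; apply: contrapT => H; apply: nA.
rewrite /interior nbhsE; exists U => // y Uy; apply: contrapT => nAy.
by apply: H; exists y.
Qed.

Lemma up_chi2 A B (x : X) : B `<=` A ->
  upper_fun (fun y => chi A y + chi B y) x = chi (closure A) x + chi (closure B) x :> R.
Proof.
move=> sBA.
have [xB|nxB] := pselect (closure B x).
  have xA : closure A x by apply: closureS xB.
  rewrite !chi_in //; apply: (@upper_eq R X _ 0 2) => //.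
  - by move=> y; exact: chi2_bnd.
  - move=> U oU Ux; have [y [Uy By]] := cl_meet xB oU Ux; exists y => //.
    by rewrite !chi_in //; exact: sBA.
  - by exists setT; split => //; [exact: openT | move=> y _; case/andP: (chi2_bnd A B y)].
have [xA|nxA] := pselect (closure A x).
  rewrite chi_in // chi_out //; apply: (@upper_eq R X _ 0 2) => //.
  - by move=> y; exact: chi2_bnd.
  - move=> U oU Ux; have [y [Uy Ay]] := cl_meet xA oU Ux; exists y => //.
    by rewrite chi_in //; case/andP: (chi_bnd B y) => ? _; lra.
  - have [U [oU Ux nB]] := ncl nxB; exists U; split => // y Uy.
    by rewrite (chi_out (nB y Uy)); case/andP: (chi_bnd A y) => _ ?; lra.
rewrite !chi_out //; apply: (@upper_eq R X _ 0 2) => //.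
- by move=> y; exact: chi2_bnd.
- by move=> U oU Ux; exists x => //; case/andP: (chi2_bnd A B x); rewrite addr0.
- have [U [oU Ux nA]] := ncl nxA; exists U; split => // y Uy.
  have nAy := nA y Uy; have nBy : ~ B y by move/sBA.
  by rewrite !chi_out.
Qed.

Lemma low_chi2 A B (x : X) : B `<=` A ->
  lower_fun (fun y => chi A y + chi B y) x = chi (interior A) x + chi (interior B) x :> R.
Proof.
move=> sBA.
have [xB|nxB] := pselect (interior B x).
  have xA : interior A x by apply: interiorS xB.
  rewrite !chi_in //; apply: (@lower_eq R X _ 0 2) => //.
  - by move=> y; exact: chi2_bnd.
  - by move=> U oU Ux; exists x => //; case/andP: (chi2_bnd A B x).
  - have [U [oU Ux UB]] := int_in xB; exists U; split => // y Uy.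
    have By := UB y Uy; have Ay := sBA _ By; rewrite !chi_in //.
have [xA|nxA] := pselect (interior A x).
  rewrite chi_in // chi_out //; apply: (@lower_eq R X _ 0 2) => //.
  - by move=> y; exact: chi2_bnd.
  - move=> U oU Ux; have [y [Uy nBy]] := nint nxB oU Ux; exists y => //.
    by rewrite (chi_out nBy); case/andP: (chi_bnd A y) => _ ?; lra.
  - have [U [oU Ux UA]] := int_in xA; exists U; split => // y Uy.
    by rewrite chi_in; [case/andP: (chi_bnd B y) => ? _; lra | exact: UA].
rewrite !chi_out //; apply: (@lower_eq R X _ 0 2) => //.
- by move=> y; exact: chi2_bnd.
- move=> U oU Ux; have [y [Uy nAy]] := nint nxA oU Ux; exists y => //.
  have nBy : ~ B y by move/sBA.
  by rewrite !chi_out.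
- exists setT; split; [exact: openT | by [] | move=> y _; case/andP: (chi2_bnd A B y) => ? _; lra].
Qed.

Lemma chi0 (x : X) : chi set0 x = 0 :> R.
Proof. by rewrite chi_out. Qed.

Lemma up_chi A (x : X) : upper_fun (chi A) x = chi (closure A) x :> R.
Proof.
have -> : chi A = (fun y => chi A y + chi set0 y) :> (X -> R).
  by apply: funext => y; rewrite chi0 addr0.
by rewrite up_chi2 ?closure0 ?chi0 ?addr0 //; exact: sub0set.
Qed.

Lemma low_chi A (x : X) : lower_fun (chi A) x = chi (interior A) x :> R.
Proof.
have -> : chi A = (fun y => chi A y + chi set0 y) :> (X -> R).
  by apply: funext => y; rewrite chi0 addr0.
by rewrite low_chi2 ?interior0 ?chi0 ?addr0 //; exact: sub0set.
Qed.

Lemma sharp_chi A : sharp (chi A) = chi (interior (closure A)) :> (X -> R).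
Proof.
apply: funext => x; rewrite /sharp.
have -> : upper_fun (chi A) = chi (closure A) :> (X -> R) by apply: funext => y; exact: up_chi.
exact: low_chi.
Qed.

Lemma chi_inj A B : chi A = chi B :> (X -> R) -> A = B.
Proof.
move=> e; apply/seteqP; split => x Ax; apply: contrapT => nBx.
  by have := congr1 (fun f => f x) e; rewrite /= chi_in // chi_out //; apply/eqP; rewrite oner_eq0.
by have := congr1 (fun f => f x) e; rewrite /= chi_out // chi_in //; apply/eqP; rewrite eq_sym oner_eq0.
Qed.

End Chi.

Section Sq.
Context {R : realType} {X : topologicalType}.

Lemma up_sq (h : X -> R) M (x : X) : (forall y, 0 <= h y <= M) ->
  upper_fun (fun y => h y ^+ 2) x = (upper_fun h x) ^+ 2.
Proof.
move=> hb; rewrite /upper_fun.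
have key U : U x -> sup ((fun y => h y ^+ 2) @` U) = (sup (h @` U)) ^+ 2.
  move=> Ux; rewrite -(image_comp h (fun s => s ^+ 2)).
  apply: (@sup_sq R _ M); first exact: im_n0 Ux.
  by move=> _ [y _ <-].
have -> : [set sup ((fun y => h y ^+ 2) @` U) | U in open_nbhd x] =
    [set s ^+ 2 | s in [set sup (h @` U) | U in open_nbhd x]].
  apply/seteqP; split => t.
    by move=> [U [oU Ux] <-]; exists (sup (h @` U)); [exists U|rewrite key].
  by move=> [_ [U [oU Ux] <-] <-]; exists U => //; rewrite key.
apply: (@inf_sq R _ M); first exact: imnbhd_n0.
by move=> _ [U [_ Ux] <-]; exact: sup_im_bnd hb Ux.
Qed.

Lemma low_sq (h : X -> R) M (x : X) : (forall y, 0 <= h y <= M) ->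
  lower_fun (fun y => h y ^+ 2) x = (lower_fun h x) ^+ 2.
Proof.
move=> hb; rewrite /lower_fun.
have key U : U x -> inf ((fun y => h y ^+ 2) @` U) = (inf (h @` U)) ^+ 2.
  move=> Ux; rewrite -(image_comp h (fun s => s ^+ 2)).
  apply: (@inf_sq R _ M); first exact: im_n0 Ux.
  by move=> _ [y _ <-].
have -> : [set inf ((fun y => h y ^+ 2) @` U) | U in open_nbhd x] =
    [set s ^+ 2 | s in [set inf (h @` U) | U in open_nbhd x]].
  apply/seteqP; split => t.
    by move=> [U [oU Ux] <-]; exists (inf (h @` U)); [exists U|rewrite key].
  by move=> [_ [U [oU Ux] <-] <-]; exists U => //; rewrite key.
apply: (@sup_sq R _ M); first exact: imnbhd_n0.
by move=> _ [U [_ Ux] <-]; exact: inf_im_bnd hb Ux.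
Qed.

End Sq.

Section Main.
Context {R : realType} {X : topologicalType}.
Implicit Types (U V : set X).

Lemma chi_mul U V x : chi U x * chi V x = chi (U `&` V) x :> R.
Proof.
have [Ux|nUx] := pselect (U x); last first.
  by rewrite (chi_out nUx) mul0r (@chi_out R X (U `&` V) x) // => -[].
have [Vx|nVx] := pselect (V x); last first.
  by rewrite (chi_out nVx) mulr0 (@chi_out R X (U `&` V) x) // => -[].
by rewrite (chi_in Ux) (chi_in Vx) mulr1 (@chi_in R X (U `&` V) x).
Qed.

Lemma chi_sum U V x : chi U x + chi V x = chi (U `|` V) x + chi (U `&` V) x :> R.
Proof.
have [Ux|nUx] := pselect (U x); have [Vx|nVx] := pselect (V x).
- by rewrite (chi_in Ux) (chi_in Vx) (@chi_in R X (U `|` V) x) ?(@chi_in R X (U `&` V) x) //; left.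
- rewrite (chi_in Ux) (chi_out nVx) (@chi_in R X (U `|` V) x); last by left.
  by rewrite (@chi_out R X (U `&` V) x); [lra | case].
- rewrite (chi_out nUx) (chi_in Vx) (@chi_in R X (U `|` V) x); last by right.
  by rewrite (@chi_out R X (U `&` V) x); [lra | case].
- rewrite (chi_out nUx) (chi_out nVx) (@chi_out R X (U `|` V) x); last by case.
  by rewrite (@chi_out R X (U `&` V) x); [lra | case].
Qed.

Lemma ro_open U : regular_open U -> open U.
Proof. by move=> hU; rewrite hU; exact: open_interior. Qed.

Lemma ro_meetE U V : regular_open U -> regular_open V ->
  interior (closure (U `&` V)) = U `&` V.
Proof.
move=> hU hV; apply/seteqP; split.
  move=> x hx; split.
    by rewrite hU; apply: (interiorS (closureS (@subIsetl _ U V))).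
  by rewrite hV; apply: (interiorS (closureS (@subIsetr _ U V))).
have oUV : open (U `&` V) by apply: openI; exact: ro_open.
by rewrite -(open_subsetE _ oUV); exact: subset_closure.
Qed.

Lemma chiT (x : X) : chi setT x = 1 :> R.
Proof. exact: chi_in. Qed.

Lemma sharp1 : sharp (fun _ : X => 1 : R) = chi setT.
Proof.
rewrite (_ : (fun _ => 1) = chi setT); last by apply: funext => x; rewrite chiT.
by rewrite sharp_chi closureT interiorT.
Qed.

Lemma sharp0 : sharp (fun _ : X => 0 : R) = chi set0.
Proof.
rewrite (_ : (fun _ => 0) = chi set0); last by apply: funext => x; rewrite chi0.
by rewrite sharp_chi closure0 interior0.
Qed.

Lemma idem_fwd (e : X -> R) : idempotentN e -> exists U : set X, regular_open U /\ e = chi U.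
Proof.
move=> [[[M hM] she] mee].
have mee' : sharp (fun y => e y ^+ 2) = e.
  have -> : (fun y => e y ^+ 2) = (fun y => e y * e y) by apply: funext => y; rewrite expr2.
  exact: mee.
have hb y : - M <= e y <= M by rewrite -ler_norml.
have gb y : 0 <= e y ^+ 2 <= M * M.
  have := hb y => /andP[? ?]; apply/andP; split; [exact: sqr_ge0 | nra].
have e0 y : 0 <= e y.
  rewrite -mee' /sharp.
  have hup z : 0 <= upper_fun (fun y => e y ^+ 2) z <= M * M by exact: upper_bnd gb.
  by case/andP: (@lower_bnd R X _ 0 (M * M) y hup).
have eb y : 0 <= e y <= M by rewrite e0; case/andP: (hb y).
have esq x : e x = e x ^+ 2.
  rewrite -{1}mee' /sharp.
  have -> : upper_fun (fun y => e y ^+ 2) = (fun y => upper_fun e y ^+ 2).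
    by apply: funext => y; exact: up_sq eb.
  rewrite (@low_sq R X (upper_fun e) M x); last by move=> y; exact: upper_bnd eb.
  by have := congr1 (fun f => f x) she; rewrite /sharp /= => ->.
have e01 x : e x = 0 \/ e x = 1.
  have : e x * (e x - 1) = 0 by rewrite mulrBr mulr1 -expr2 -esq subrr.
  by move/eqP; rewrite mulf_eq0 subr_eq0 => /orP[/eqP|/eqP]; [left|right].
pose U := [set x | e x = 1].
have eU : e = chi U.
  apply: funext => x; case: (e01 x) => ex.
    by rewrite ex chi_out // /U /= ex => /eqP; rewrite eq_sym oner_eq0.
  by rewrite ex chi_in.
exists U; split => //; apply: (@chi_inj R).
by rewrite -sharp_chi -eU she.
Qed.

End Main.

Theorem mainTheorem11 (R : realType) (X : topologicalType) :
  (forall e : X -> R,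
      idempotentN e <-> exists U : set X, regular_open U /\ e = chi U) /\
  (forall U V : set X, regular_open U -> regular_open V ->
      chi U = chi V :> (X -> R) -> U = V) /\
  (forall U V : set X, regular_open U -> regular_open V ->
      chi (ro_meet U V) = idem_meet (chi U) (chi V) :> (X -> R) /\
      chi (ro_join U V) = idem_join (chi U) (chi V) :> (X -> R)) /\
  (forall U : set X, regular_open U ->
      chi (ro_compl U) = idem_compl (chi U) :> (X -> R)) /\
  chi set0 = (zeroN : X -> R) /\ chi setT = (oneN : X -> R).
Proof.
have mulchi (U V : set X) : (fun x => chi U x * chi V x) = chi (U `&` V) :> (X -> R).
  by apply: funext => x; exact: chi_mul.
split.
  move=> e; split; first exact: idem_fwd.
  move=> [U [hU ->]]; split; last by rewrite /mulN mulchi setIid sharp_chi -hU.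
  split; last by rewrite sharp_chi -hU.
  exists 1 => x; rewrite ger0_norm; case/andP: (chi_bnd (R:=R) U x) => //.
split; first by move=> U V _ _; exact: chi_inj.
split.
  move=> U V hU hV; split.
    by rewrite /idem_meet /mulN /ro_meet mulchi sharp_chi ro_meetE.
  rewrite /idem_join /subN /addN /mulN mulchi sharp_chi ro_meetE //.
  have sIU : closure (U `&` V) `<=` closure (U `|` V).
    by apply: closureS => x [Ux _]; left.
  have -> : sharp (fun x => chi U x + chi V x) =
      (fun x => chi (interior (closure (U `|` V))) x + chi (U `&` V) x) :> (X -> R).
    apply: funext => x; rewrite /sharp.
    have -> : (fun x => chi U x + chi V x) =
        (fun x => chi (U `|` V) x + chi (U `&` V) x) :> (X -> R).
      by apply: funext => y; exact: chi_sum.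
    have -> : upper_fun (fun x => chi (U `|` V) x + chi (U `&` V) x) =
        (fun y => chi (closure (U `|` V)) y + chi (closure (U `&` V)) y) :> (X -> R).
      by apply: funext => y; apply: up_chi2 => z [Uz _]; left.
    by rewrite low_chi2 // ro_meetE.
  have -> : (fun x => chi (interior (closure (U `|` V))) x + chi (U `&` V) x
      - chi (U `&` V) x) = chi (interior (closure (U `|` V))) :> (X -> R).
    by apply: funext => x; rewrite addrK.
  rewrite sharp_chi /ro_join; f_equal; symmetry.
  exact: (interior_closure_idem (U `|` V)).
split.
  move=> U hU; rewrite /idem_compl /subN /oneN sharp1.
  have -> : (fun x => chi setT x - chi U x) = chi (~` U) :> (X -> R).
    apply: funext => x; rewrite chiT.
    have [Ux|nUx] := pselect (U x).
      by rewrite (chi_in Ux) subrr chi_out.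
    by rewrite (chi_out nUx) subr0 chi_in.
  rewrite sharp_chi /ro_compl.
  by rewrite -(closure_id (~` U)).1 //; apply: open_closedC; exact: ro_open.
by rewrite /zeroN /oneN sharp0 sharp1.
Qed.
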